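(* Let $\alpha,n\in\mathbb{Q}$ with $n\neq0$. The torsion subgroup of $E_{\alpha,-n^2}(\mathbb{Q})$, where $$E_{\alpha,-n^2}:\ y^2=x^3+\alpha x^2-n^2x,$$ is not isomorphic to $\mathbb{Z}/2\mathbb{Z}\times\mathbb{Z}/8\mathbb{Z}$. *)

(* Defs.v *)
From mathcomp Require Import all_boot all_order all_algebra.
Set Implicit Arguments. Unset Strict Implicit. Unset Printing Implicit Defensive.
Import Order.TTheory GRing.Theory Num.Theory.
Local Open Scope ring_scope.

(* Rational points of y^2 = x^3 + a x^2 + b x, projective closure:
   None = point at infinity O, Some (x, y) = affine point. *)
Definition ec_point := option (rat * rat).

Definition on_curve (a b : rat) (P : ec_point) : bool :=
  match P with
  | None => true
  | Some (x, y) => y ^+ 2 == x ^+ 3 + a * x ^+ 2 + b * x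
  end.

Definition ec_add (a b : rat) (P Q : ec_point) : ec_point :=
  match P, Q with
  | None, _ => Q
  | _, None => P
  | Some (x1, y1), Some (x2, y2) =>
      if (x1 == x2) && (y1 + y2 == 0) then None
      else
        let l := if x1 == x2
                 then (3 * x1 ^+ 2 + 2 * a * x1 + b) / (2 * y1)
                 else (y2 - y1) / (x2 - x1) in
        let x3 := l ^+ 2 - a - x1 - x2 in
        Some (x3, - (l * (x3 - x1) + y1))
  end.

Definition ec_mul (a b : rat) (k : nat) (P : ec_point) : ec_point :=
  iter k (ec_add a b P) None.

Definition is_torsion (a b : rat) (P : ec_point) : Prop :=
  on_curve a b P /\ exists k : nat, (0 < k)%N /\ ec_mul a b k P = None.

Definition torsion_iso_Z2xZ8 (a b : rat) : Prop :=
  exists f : 'Z_2 * 'Z_8 -> ec_point,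
    injective f /\
    (forall u, is_torsion a b (f u)) /\
    (forall P, is_torsion a b P -> exists u, f u = P) /\
    (forall u v, f (u + v) = ec_add a b (f u) (f v)).

(* Main.v *)
Require Import Defs.
From mathcomp Require Import all_boot all_order all_algebra.
From mathcomp Require Import zify ring lra.
Import GRing.Theory Num.Theory.
Set Implicit Arguments. Unset Strict Implicit.

Lemma sq_of_coprime a b c : coprime a b -> a * b = c ^ 2 -> exists r, a = r ^ 2.
Proof.
move=> cab habc; exists (gcdn a c).
have cc : c * c = a * b by rewrite habc expnS expn1.
apply/eqP; rewrite eqn_dvd; apply/andP; split.
- have -> : gcdn a c ^ 2 = gcdn (gcdn (a * a) (a * c)) (gcdn (c * a) (c * c)).
    by rewrite expnS expn1 muln_gcdl -!muln_gcdr.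
  by rewrite [c * a]mulnC !dvdn_gcd cc !dvdn_mulr.
- have := dvdn_gcdl a c; have := dvdn_gcdr a c => h1 h2.
  have : gcdn a c ^ 2 %| gcdn (a * a) (a * b).
    by rewrite dvdn_gcd -cc expnS expn1; apply/andP; split; apply: dvdn_mul.
  have e : gcdn (a*a) (a*b) = a by rewrite -muln_gcdr (eqP cab) muln1.
  by rewrite e.
Qed.

Lemma sq_of_coprime_r a b c : coprime a b -> a * b = c ^ 2 -> exists r, b = r ^ 2.
Proof. by move=> h1 h2; apply: (@sq_of_coprime b a c); rewrite 1?coprime_sym // mulnC. Qed.

Lemma odd_form n : odd n -> exists k, n = 2 * k + 1.
Proof. move=> on; exists n./2; have := odd_double_half n; rewrite on -mul2n; lia. Qed.

Lemma even_form n : ~~ odd n -> exists k, n = 2 * k.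
Proof. move=> on; exists n./2; have := odd_double_half n; rewrite (negbTE on) -mul2n; lia. Qed.

Lemma dvd_coprime1 g m n : coprime m n -> g %| m -> g %| n -> g = 1.
Proof.
move=> c gm gn; have : g %| gcdn m n by rewrite dvdn_gcd gm gn.
by rewrite (eqP c) dvdn1 => /eqP.
Qed.

Lemma pyth X U V : X ^ 2 = U ^ 2 + V ^ 2 -> coprime X V -> ~~ odd U -> odd V ->
  exists p q, [/\ X = p ^ 2 + q ^ 2, V + q ^ 2 = p ^ 2, U = 2 * p * q & coprime p q].
Proof.
move=> h cXV eU oV.
have oX : odd X.
  by move: (congr1 odd h); rewrite oddD !oddX /= (negbTE eU) oV.
have VX : V <= X by rewrite -leq_sqr h leq_addl.
have [i Hi] := odd_form oX; have [j Hj] := odd_form oV.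
have [U' HU] := even_form eU.
set A := i + j + 1; set B := i - j.
have XA : X = A + B by rewrite /A /B; lia.
have VA : V + B = A by rewrite /A /B; lia.
have AB : A * B = U' ^ 2.
  move: h; rewrite XA HU -VA; nia.
have cAB : coprime A B.
  apply/eqP; apply: (dvd_coprime1 cXV).
    by rewrite XA dvdn_add ?dvdn_gcdl ?dvdn_gcdr.
  have -> : V = A - B by lia.
  by rewrite dvdn_sub ?dvdn_gcdl ?dvdn_gcdr.
have [p Hp] := sq_of_coprime cAB AB.
have [q Hq] := sq_of_coprime_r cAB AB.
exists p, q; split.
- by rewrite XA Hp Hq.
- by rewrite -Hq -Hp.
- apply: (@expIn 2) => //=.
  by rewrite /= HU !expnMn -AB Hp Hq mulnA.
- by move: cAB; rewrite Hp Hq coprime_pexpl // coprime_pexpr.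
Qed.

Lemma reduce x y z : 0 < x -> 0 < y -> 0 < z -> x ^ 4 = y ^ 4 + z ^ 2 ->
  exists x' y' z', [/\ 0 < x' <= x, 0 < y', 0 < z', coprime x' y' & x' ^ 4 = y' ^ 4 + z' ^ 2].
Proof.
move=> x0 y0 z0 h.
have g0 : 0 < gcdn x y by rewrite gcdn_gt0 x0.
set g := gcdn x y in g0.
have Hx : x = x %/ g * g by rewrite divnK // dvdn_gcdl.
have Hy : y = y %/ g * g by rewrite divnK // dvdn_gcdr.
set x' := x %/ g in Hx; set y' := y %/ g in Hy.
have cxy : coprime x' y'.
  have : gcdn x' y' * g == 1 * g by rewrite muln_gcdl -Hx -Hy mul1n.
  by rewrite eqn_pmul2r.
have gz : g ^ 2 %| z.
  rewrite -(@dvdn_pexp2r _ _ 2) // -expnM /=.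
  have -> : z ^ 2 = x ^ 4 - y ^ 4 by lia.
  by rewrite dvdn_sub // dvdn_exp2r // ?dvdn_gcdl ?dvdn_gcdr.
have Hz : z = z %/ g ^ 2 * g ^ 2 by rewrite divnK.
set z' := z %/ g ^ 2 in Hz.
exists x', y', z'; split => //.
- apply/andP; split; first by move: x0; rewrite Hx muln_gt0 => /andP[].
  by rewrite {1}Hx leq_pmulr.
- by move: y0; rewrite Hy muln_gt0 => /andP[].
- by move: z0; rewrite Hz muln_gt0 => /andP[].
- apply/eqP; rewrite -(@eqn_pmul2r (g ^ 4)) ?expn_gt0 ?g0 //.
  have e : z' ^ 2 * g ^ 4 = (z' * g ^ 2) ^ 2 by rewrite expnMn -expnM.
  by rewrite mulnDl e -!expnMn -Hx -Hy -Hz h.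
Qed.

Lemma desc_even x y E O : 0 < x -> x ^ 2 = E ^ 2 + O ^ 2 -> coprime E O -> ~~ odd E -> odd O ->
  y ^ 2 = 2 * E * O -> 0 < E -> 0 < O ->
  exists P Q t, [/\ 0 < P < x, 0 < Q, 0 < t & P ^ 4 = Q ^ 4 + t ^ 2].
Proof.
move=> x0 hx cEO eE oO hy E0 O0.
have cxO : coprime x O.
  apply/eqP; apply: (@dvd_coprime1 _ O (E ^ 2)); first by rewrite coprime_pexpr // coprime_sym.
    by rewrite dvdn_gcdr.
  have g2 : gcdn x O %| x ^ 2 by rewrite expnS expn1 dvdn_mulr ?dvdn_gcdl.
  have gO2 : gcdn x O %| O ^ 2 by rewrite expnS expn1 dvdn_mulr ?dvdn_gcdr.
  by move: g2; rewrite hx dvdn_addl.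
have [p [q [Hx HO HE cpq]]] := pyth hx cxO eE oO.
have p0 : 0 < p by move: E0; rewrite HE !muln_gt0 => /andP[/andP[]].
have q0 : 0 < q by move: E0; rewrite HE !muln_gt0 => /andP[].
have ey : ~~ odd y.
  have : ~~ odd (y ^ 2) by rewrite hy -!mulnA oddM.
  by rewrite oddX.
have [y' Hy'] := even_form ey.
have hy' : p * q * O = y' ^ 2.
  move: hy; rewrite Hy' HE; nia.
have cpO : coprime p O.
  apply/eqP; apply: (dvd_coprime1 (coprimeXr 2 cpq)); first by rewrite dvdn_gcdl.
  have g2 : gcdn p O %| p ^ 2 by rewrite expnS expn1 dvdn_mulr ?dvdn_gcdl.
  by move: g2; rewrite -HO dvdn_addr // dvdn_gcdr.
have cqO : coprime q O.
  apply/eqP; apply: (dvd_coprime1 (coprimeXr 2 (etrans (coprime_sym q p) cpq))); first by rewrite dvdn_gcdl.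
  by rewrite -HO dvdn_add // ?dvdn_gcdr // expnS expn1 dvdn_mulr ?dvdn_gcdl.
have cpqO : coprime (p * q) O by rewrite coprimeMl cpO cqO.
have [t Ht] := sq_of_coprime_r cpqO hy'.
have [s Hs] := sq_of_coprime cpqO hy'.
have [P HP] := sq_of_coprime cpq Hs.
have [Q HQ] := sq_of_coprime_r cpq Hs.
exists P, Q, t; split.
- apply/andP; split; first by move: p0; rewrite HP expn_gt0 orbF.
  have P0 : 0 < P by move: p0; rewrite HP expn_gt0 orbF.
  have h1 : P <= p by rewrite HP expnS expn1 leq_pmulr.
  have h2 : p <= p ^ 2 by rewrite expnS expn1 leq_pmulr.
  have h3 : 0 < q ^ 2 by rewrite expn_gt0 q0.
  lia.
- by move: q0; rewrite HQ expn_gt0 orbF.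
- by move: O0; rewrite Ht expn_gt0 orbF.
- by rewrite -[4]/(2 * 2) !expnM -HP -HQ -Ht addnC HO.
Qed.

Lemma descent x y z : 0 < x -> 0 < y -> 0 < z -> coprime x y -> x ^ 4 = y ^ 4 + z ^ 2 ->
  exists P Q t, [/\ 0 < P < x, 0 < Q, 0 < t & P ^ 4 = Q ^ 4 + t ^ 2].
Proof.
move=> x0 y0 z0 cxy h.
have hodd : odd (x ^ 4) = odd (y ^ 4) (+) odd (z ^ 2) by rewrite h oddD.
rewrite !oddX /= in hodd.
have ox : odd x.
  case: (boolP (odd x)) => // ex.
  have oy : odd y.
    case: (boolP (odd y)) => // ey.
    have := @dvd_coprime1 2 _ _ cxy; rewrite !dvdn2 ex ey => /(_ isT isT) //.
  rewrite (negbTE ex) oy /= in hodd.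
  have oz : odd z by move: hodd; case: (odd z).
  have [k Hk] := even_form ex; have [j Hj] := odd_form oy; have [l Hl] := odd_form oz.
  have e1 : y ^ 4 = 4 * (4 * (j ^ 2 + j) ^ 2 + 2 * (j ^ 2 + j)) + 1 by rewrite Hj; ring.
  have e2 : z ^ 2 = 4 * (l ^ 2 + l) + 1 by rewrite Hl; ring.
  have e3 : x ^ 4 = 4 * (4 * k ^ 4) by rewrite Hk; ring.
  move: h; rewrite e1 e2 e3.
  move: (4 * (j ^ 2 + j) ^ 2 + 2 * (j ^ 2 + j)) (l ^ 2 + l) (k ^ 4) => a b c.
  lia.
rewrite ox in hodd.
case: (boolP (odd y)) => oy.
- have ez : ~~ odd z by move: hodd; rewrite oy; case: (odd z).
  have h' : (x ^ 2) ^ 2 = z ^ 2 + (y ^ 2) ^ 2 by rewrite -!expnM addnC.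
  have c2 : coprime (x ^ 2) (y ^ 2) by rewrite coprime_pexpl // coprime_pexpr.
  have oy2 : odd (y ^ 2) by rewrite oddX.
  have [m [n [Hx HO HE cmn]]] := pyth h' c2 ez oy2.
  have m0 : 0 < m by move: z0; rewrite HE !muln_gt0 => /andP[/andP[]].
  have n0 : 0 < n by move: z0; rewrite HE !muln_gt0 => /andP[].
  exists m, n, (x * y); split => //.
  + rewrite m0 /= -ltn_sqr Hx -{1}[m ^ 2]addn0 ltn_add2l expn_gt0 n0 //.
  + by rewrite muln_gt0 x0.
  + by rewrite -[4]/(2 * 2) !expnM expnMn Hx -HO; ring.
- have oz : odd z by move: hodd; rewrite (negbTE oy); case: (odd z).
  have h' : (x ^ 2) ^ 2 = (y ^ 2) ^ 2 + z ^ 2 by rewrite -!expnM.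
  have c2 : coprime (x ^ 2) z.
    apply/eqP; apply: (@dvd_coprime1 _ (x ^ 2) (y ^ 4)).
      by rewrite coprime_pexpl // coprime_pexpr.
      by rewrite dvdn_gcdl.
    have -> : y ^ 4 = x ^ 4 - z ^ 2 by lia.
    rewrite dvdn_sub //.
      by rewrite -[4]/(2 * 2) expnM expnS expn1 dvdn_mulr ?dvdn_gcdl.
    by rewrite expnS expn1 dvdn_mulr ?dvdn_gcdr.
  have ey2 : ~~ odd (y ^ 2) by rewrite oddX.
  have [M [N [Hx HO HE cMN]]] := pyth h' c2 ey2 oz.
  have M0 : 0 < M by move: (y0); rewrite -(leq_exp2r 1 _ (isT : 0 < 2)) exp1n HE !muln_gt0 => /andP[/andP[]].
  have N0 : 0 < N by move: (y0); rewrite -(leq_exp2r 1 _ (isT : 0 < 2)) exp1n HE !muln_gt0 => /andP[].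
  have oMN : odd M (+) odd N.
    by move: (congr1 odd Hx); rewrite oddD !oddX /= ox.
  case: (boolP (odd M)) => oM.
  + have eN : ~~ odd N by move: oMN; rewrite oM; case: (odd N).
    apply: (@desc_even x y N M) => //.
    * by rewrite addnC.
    * by rewrite coprime_sym.
    * by rewrite HE -mulnA [M * N]mulnC mulnA.
  + have oN : odd N by move: oMN; rewrite (negbTE oM); case: (odd N).
    by apply: (@desc_even x y M N).
Qed.

Lemma fermat_natN N x y z : x <= N -> 0 < x -> 0 < y -> 0 < z -> x ^ 4 = y ^ 4 + z ^ 2 -> False.
Proof.
elim: N x y z => [|N IH] x y z hx x0 y0 z0 h.
  lia.
have [x' [y' [z' [/andP[x'0 x'x] y'0 z'0 c e]]]] := reduce x0 y0 z0 h.
have [P [Q [t [/andP[P0 Px'] Q0 t0 e']]]] := descent x'0 y'0 z'0 c e.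
apply: (IH P Q t) => //.
lia.
Qed.

Lemma fermat_nat x y z : 0 < x -> 0 < y -> 0 < z -> x ^ 4 = y ^ 4 + z ^ 2 -> False.
Proof. exact: (@fermat_natN x). Qed.

Unset Implicit Arguments.
Local Open Scope ring_scope.

Lemma rat_sq (r : rat) : exists a d : nat, [/\ (0 < d)%N, r ^+ 2 = (a%:R / d%:R) ^+ 2 & (r != 0 -> (0 < a)%N)].
Proof.
exists `|numq r|%N, `|denq r|%N; split.
- by rewrite absz_gt0 denq_neq0.
- rewrite -[LHS]real_normK ?num_real //; congr (_ ^+ 2).
  rewrite -{1}(divq_num_den r) normf_div !natr_absz -!intr_norm //.
- by rewrite absz_gt0 numq_eq0.
Qed.


Lemma fermat_rat (A C Z : rat) : A != 0 -> Z != 0 -> C ^+ 4 = A ^+ 4 + Z ^+ 2 -> False.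
Proof.
move=> A0 Z0 H.
have [a [f [f0 HA aP]]] := rat_sq A.
have [c [e [e0 HC _]]] := rat_sq C.
have [z [g [g0 HZ zP]]] := rat_sq Z.
move: H; rewrite -[4%N]/(2 * 2)%N !exprM HA HC HZ => H.
have ne : (e%:R : rat) != 0 by rewrite pnatr_eq0 -lt0n.
have nf : (f%:R : rat) != 0 by rewrite pnatr_eq0 -lt0n.
have ng : (g%:R : rat) != 0 by rewrite pnatr_eq0 -lt0n.
have Hn : ((c * f * g) ^ 4 = (a * e * g) ^ 4 + (z * e ^ 2 * f ^ 2 * g) ^ 2)%N.
  apply/eqP; rewrite -(eqr_nat rat) !natrD !natrX !natrM ?natrX; apply/eqP.
  have E1 : (c%:R * f%:R * g%:R : rat) ^+ 4 = ((c%:R / e%:R) ^+ 2) ^+ 2 * (e%:R * f%:R * g%:R) ^+ 4.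
    by field; exact: ne.
  have E2 : (a%:R * e%:R * g%:R : rat) ^+ 4 + (z%:R * (e%:R * e%:R) * (f%:R * f%:R) * g%:R) ^+ 2 =
     (((a%:R / f%:R) ^+ 2) ^+ 2 + (z%:R / g%:R) ^+ 2) * (e%:R * f%:R * g%:R) ^+ 4.
    by field; rewrite ng nf.
  by rewrite E1 E2 H.
have a0 := aP A0; have z0 := zP Z0.
have y0 : (0 < a * e * g)%N by rewrite !muln_gt0 a0 e0 g0.
have z0' : (0 < z * e ^ 2 * f ^ 2 * g)%N by rewrite !muln_gt0 z0 e0 f0 g0.
have x0 : (0 < c * f * g)%N.
  have : (0 < (c * f * g) ^ 4)%N by rewrite Hn addn_gt0 expn_gt0 y0.
  by rewrite expn_gt0 orbF.
exact: (fermat_nat x0 y0 z0' Hn).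
Qed.

Lemma add_self a b P : ec_add a b P P = P -> P = None.
Proof.
case: P => [[x y]|] //=; rewrite eqxx /=.
case: eqP => [_ //|hy] [] h1 h2.
exfalso; apply: hy; move: h2; rewrite h1 subrr mulr0 add0r => h2; lra.
Qed.

Lemma dbl_none a b x y : ec_add a b (Some (x, y)) (Some (x, y)) = None -> y = 0.
Proof. by rewrite /= eqxx /=; case: eqP => // h _; lra. Qed.

Lemma dbl_zero a b x : ec_add a b (Some (x, 0)) (Some (x, 0)) = None.
Proof. by rewrite /= eqxx addr0 eqxx. Qed.

Definition dblx (a b x y : rat) :=
  ((3 * x ^+ 2 + 2 * a * x + b) / (2 * y)) ^+ 2 - a - x - x.

Lemma dbl_some (a b x y : rat) : y != 0 ->
  exists y3, ec_add a b (Some (x, y)) (Some (x, y)) = Some (dblx a b x y, y3).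
Proof.
move=> y0; rewrite /= eqxx /=.
have -> : (y + y == 0) = false by apply/negbTE; apply: contra y0 => /eqP h; apply/eqP; lra.
by eexists.
Qed.

Lemma dbl_gen (a b x y r s t : rat) : y != 0 -> y ^+ 2 = (x - r) * (x - s) * (x - t) ->
  a = - (r + s + t) -> b = r * s + s * t + t * r ->
  (dblx a b x y - r) * (4 * y ^+ 2) = ((x - r) ^+ 2 - (r - s) * (r - t)) ^+ 2.
Proof.
move=> y0 hy ha hb.
have -> : (dblx a b x y - r) * (4 * y ^+ 2) =
   (3 * x ^+ 2 + 2 * a * x + b) ^+ 2 - 4 * (a + x + x + r) * y ^+ 2.
  by rewrite /dblx; field.
by rewrite hy ha hb; ring.
Qed.

Lemma dbl0 (a b x y : rat) : y != 0 -> y ^+ 2 = x ^+ 3 + a * x ^+ 2 + b * x ->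
  dblx a b x y * (4 * y ^+ 2) = (x ^+ 2 - b) ^+ 2.
Proof.
move=> y0 hy.
have -> : dblx a b x y * (4 * y ^+ 2) =
   (3 * x ^+ 2 + 2 * a * x + b) ^+ 2 - 4 * (a + x + x) * y ^+ 2.
  by rewrite /dblx; field.
by rewrite hy; ring.
Qed.

Lemma sq_div (v N y : rat) : y != 0 -> v * (4 * y ^+ 2) = N ^+ 2 -> v = (N / (2 * y)) ^+ 2.
Proof. by move=> y0 h; rewrite expr_div_n -h; field. Qed.

Theorem proposition7p8 (alpha n : rat) (hn : n != 0) :
  ~ torsion_iso_Z2xZ8 alpha (- (n ^+ 2)).
Proof.
rewrite /torsion_iso_Z2xZ8; move Eb: (- n ^+ 2) => b.
case=> f [finj [ftor [_ fhom]]].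
pose u1 : 'Z_2 * 'Z_8 := (0, 1).
have f0 : f 0 = None by apply: (@add_self alpha b); rewrite -fhom addr0.
have e8 : (u1 + u1 + (u1 + u1)) + (u1 + u1 + (u1 + u1)) = 0 by apply/eqP.
have TT : ec_add alpha b (f (u1 + u1 + (u1 + u1))) (f (u1 + u1 + (u1 + u1))) = None.
  by rewrite -fhom e8 f0.
have PP : ec_add alpha b (f (u1 + u1)) (f (u1 + u1)) = f (u1 + u1 + (u1 + u1)) by rewrite -fhom.
have QQ : ec_add alpha b (f u1) (f u1) = f (u1 + u1) by rewrite -fhom.
have nz4 : f (u1 + u1 + (u1 + u1)) <> None.
  by move=> h; have := finj _ _ (etrans h (esym f0)).
have nz2 : f (u1 + u1) <> None.
  by move=> h; have := finj _ _ (etrans h (esym f0)).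
have cT := ftor (u1 + u1 + (u1 + u1)).
have cP := ftor (u1 + u1).
have cQ := ftor u1.
move: TT PP QQ nz4 nz2 cT cP cQ.
move: (f (u1 + u1 + (u1 + u1))) (f (u1 + u1)) (f u1) => [[e yT]|] [[xp yp]|] [[xq yq]|] //;
  try by move=> *; exfalso.
move=> /dbl_none yT0 PP QQ _ _ [/= /eqP cT _] [/= /eqP cP _] [/= /eqP cQ _].
subst yT.
have yp0 : yp != 0 by apply/eqP => h; move: PP; rewrite h dbl_zero.
have yq0 : yq != 0 by apply/eqP => h; move: QQ; rewrite h dbl_zero.
have [y3 H3] := dbl_some alpha b xp yp yp0; rewrite H3 in PP; case: PP => HPx _.
have [y4 H4] := dbl_some alpha b xq yq yq0; rewrite H4 in QQ; case: QQ => HQx _.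
have n2 : 0 < n ^+ 2 by rewrite exprn_even_gt0 // hn orbT.
have xp0 : xp != 0.
  apply/eqP => x0; move/eqP: yp0; apply; apply/eqP.
  by rewrite -sqrf_eq0 cP x0; apply/eqP; ring.
have ce : e * (e ^+ 2 + alpha * e + b) = 0.
  have -> : e * (e ^+ 2 + alpha * e + b) = e ^+ 3 + alpha * e ^+ 2 + b * e by ring.
  by rewrite -cT; ring.
case: (eqVneq e 0) => [e0|e0].
  have := @dbl0 _ _ _ _ yp0 cP; rewrite HPx e0 mul0r => /esym/eqP.
  rewrite sqrf_eq0 -Eb => /eqP h.
  have := sqr_ge0 xp; lra.
have q : e ^+ 2 + alpha * e + b = 0 by move/eqP: ce; rewrite mulf_eq0 (negbTE e0) => /eqP.
have [e' ha] : exists e', alpha = - (0 + e + e') by exists (- alpha - e); ring.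
have hb : b = 0 * e + e * e' + e' * 0.
  have -> : b = e * e' + (e ^+ 2 + alpha * e + b) by rewrite ha; ring.
  by rewrite q; ring.
have sqr : forall r s t, alpha = - (r + s + t) -> b = r * s + s * t + t * r ->
    r * s * t = 0 -> exists A, xp - r = A ^+ 2.
  move=> r s t h1 h2 h3; exists (((xq - r) ^+ 2 - (r - s) * (r - t)) / (2 * yq)).
  apply: (@sq_div _ _ _ yq0); rewrite -HQx.
  apply: dbl_gen; [exact: yq0| |exact: h1|exact: h2]; rewrite cQ h1 h2.
  have -> : (xq - r) * (xq - s) * (xq - t) = xq ^+ 3 - (r + s + t) * xq ^+ 2 + (r * s + s * t + t * r) * xq - r * s * t by ring.
  by rewrite h3; ring.
have [A HA] : exists A, xp - 0 = A ^+ 2 by apply: (sqr 0 e e' ha hb); ring.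
have [C HC] : exists C, xp - e' = C ^+ 2.
  by apply: (sqr e' 0 e); [rewrite ha; ring|rewrite hb; ring|ring].
have hyP : yp ^+ 2 = (xp - e) * (xp - 0) * (xp - e') by rewrite cP ha hb; ring.
have haP : alpha = - (e + 0 + e') by rewrite ha; ring.
have hbP : b = e * 0 + 0 * e' + e' * e by rewrite hb; ring.
have h := @dbl_gen _ _ _ _ _ _ _ yp0 hyP haP hbP.
rewrite HPx subrr mul0r in h.
have H1 : (xp - e) ^+ 2 = (e - 0) * (e - e').
  by apply/eqP; rewrite -subr_eq0 -sqrf_eq0 -h.
have He' : e' = e - (xp - e) ^+ 2 / e by rewrite H1; field.
have xpA : xp = A ^+ 2 by rewrite -HA subr0.
have A0 : A != 0.
  by apply/eqP => a0; move/eqP: xp0; apply; rewrite xpA a0; ring.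
have xpp : 0 < xp by rewrite xpA exprn_even_gt0 // A0 orbT.
have wp : 0 <= xp - e' by rewrite HC sqr_ge0.
have W0 : xp + (xp - e') != 0 by apply/eqP => h0; lra.
pose Z := n * (xp + (xp - e')) / xp.
have Z0 : Z != 0 by rewrite /Z mulf_neq0 ?invr_eq0 ?mulf_neq0.
apply: (@fermat_rat A C Z A0 Z0).
rewrite -[4%N]/(2 * 2)%N !exprM -HC -xpA /Z expr_div_n exprMn.
have nb : n ^+ 2 = - b by rewrite -Eb opprK.
rewrite nb hb He'; field; by rewrite xp0 e0.
Qed.
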